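(* Let $m\ge1$, $n\ge1$, $N>2n$, and let $\mathbf y$ be a stationary reciprocal process of order $n$ on $\mathbb Z_N$, with conjugate process $\mathbf d(t)=\mathbf y(t)-\hat{\mathbb E}[\mathbf y(t)\mid\mathbf y(s),s\ne t]$ and $\Delta=\mathbb E\,\mathbf d(t)\mathbf d(t)^\top$. Then $\mathbf y$ is full rank if and only if $\Delta$ is positive definite.
   Context: A process on $\mathbb Z_N$ is a zero-mean second-order $\mathbb R^m$-valued process $\{\mathbf y(t)\}_{t=1}^N$, time indices taken modulo $N$, whose covariance $\boldsymbol\Sigma_N=\mathbb E\,\mathbf y\mathbf y^\top$ is symmetric block-circulant (its $(i,j)$ block depends only on $(i-j)\bmod N$); such a process is stationary, and $\Delta$ does not depend on $t$. Full rank means $\boldsymbol\Sigma_N>0$. $\hat{\mathbb E}[\cdot\mid\cdot]$ is orthogonal projection onto the closed linear span of the scalar components of the conditioning variables. Subspaces $\mathcal A,\mathcal B$ are conditionally orthogonal given $\mathcal C$ if $a-\hat{\mathbb E}[a\mid\mathcal C]$ and $b-\hat{\mathbb E}[b\mid\mathcal C]$ are uncorrelated for all $a\in\mathcal A,b\in\mathcal B$. The process is reciprocal of order $n$ if for every cyclic interval $(t_1,t_2)$ the variables $\{\mathbf y(t):t\in(t_1,t_2)\}$ are conditionally orthogonal to $\{\mathbf y(s):s\notin(t_1,t_2)\}$ given $\mathbf y(t_1-n+1),\dots,\mathbf y(t_1),\mathbf y(t_2),\dots,\mathbf y(t_2+n-1)$. *)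

(* Defs.v *)
(* A zero-mean second-order R^m-valued process on Z_N is
   represented through the Hilbert-space geometry of the closed linear span of
   its scalar components, which is entirely determined by the covariance
   matrix Sigma_N.  Scalar components are indexed by (t,i) : 'I_N * 'I_m; an
   element of the (finite-dimensional) linear span is given by a coefficient
   vector a : idx -> R, standing for sum_(t,i) a(t,i) y_i(t); the L^2 inner
   product of two such elements is a^T Sigma_N b. *)
From HB Require Import structures.
From mathcomp Require Import all_boot all_order all_algebra.
Set Implicit Arguments. Unset Strict Implicit. Unset Printing Implicit Defensive.
Import Order.TTheory GRing.Theory Num.Theory.
Local Open Scope ring_scope.

Section Defs.
Variables (R : realFieldType) (N m : nat).

Definition idx := ('I_N * 'I_m)%type.

(* covariance Sigma_N, seen as a function of two component indices:
   Sig (s,i) (t,j) = E y_i(s) y_j(t) *)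
Definition covf := idx -> idx -> R.

Definition coef := idx -> R.

Definition ip (Sig : covf) (a b : coef) : R :=
  \sum_(u : idx) \sum_(v : idx) a u * Sig u v * b v.

(* the scalar component y_i(t) itself *)
Definition ecomp (u : idx) : coef := fun v => (v == u)%:R.

Definition csub (a b : coef) : coef := fun v => a v - b v.

(* a lies in the linear span of the components whose index satisfies A *)
Definition supp_in (A : pred idx) (a : coef) : Prop :=
  forall u, ~~ A u -> a u = 0.

(* p represents \hat E[ x | components in C ] : p is in the span of C and
   x - p is uncorrelated with every component in C *)
Definition is_proj (Sig : covf) (C : pred idx) (x p : coef) : Prop :=
  supp_in C p /\ forall u, C u -> ip Sig (csub x p) (ecomp u) = 0.

Definition cond_orth (Sig : covf) (A B C : pred idx) : Prop :=
  forall a b pa pb : coef,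
    supp_in A a -> supp_in B b -> is_proj Sig C a pa -> is_proj Sig C b pb ->
    ip Sig (csub a pa) (csub b pb) = 0.

Definition block_circulant (Sig : covf) : Prop :=
  exists Cb : nat -> 'I_m -> 'I_m -> R,
    forall (s t : 'I_N) (i j : 'I_m),
      Sig (s, i) (t, j) = Cb ((s + N - t) %% N)%N i j.

Definition second_order_cov (Sig : covf) : Prop :=
  [/\ forall u v, Sig u v = Sig v u,
      forall a : coef, 0 <= ip Sig a a
    & block_circulant Sig].

(* cyclic open interval (t1,t2) = {t1+1, ..., t2-1} (mod N) *)
Definition cyc_interior (t1 t2 s : 'I_N) : bool :=
  let d := ((t2 + N - t1) %% N)%N in
  let k := ((s + N - t1) %% N)%N in
  (0 < k)%N && (k < d)%N.

(* boundary {t1-n+1, ..., t1} u {t2, ..., t2+n-1} (mod N) *)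
Definition cyc_boundary (n : nat) (t1 t2 s : 'I_N) : bool :=
  (((t1 + N - s) %% N)%N < n)%N || (((s + N - t2) %% N)%N < n)%N.

Definition reciprocal (n : nat) (Sig : covf) : Prop :=
  forall t1 t2 : 'I_N,
    cond_orth Sig (fun u : idx => cyc_interior t1 t2 u.1)
                  (fun u : idx => ~~ cyc_interior t1 t2 u.1)
                  (fun u : idx => cyc_boundary n t1 t2 u.1).

Definition full_rank (Sig : covf) : Prop :=
  forall a : coef, (exists u, a u != 0) -> 0 < ip Sig a a.

Definition conjugate_process (Sig : covf) (d : 'I_N -> 'I_m -> coef) : Prop :=
  forall (t : 'I_N) (i : 'I_m), exists p : coef,
    is_proj Sig (fun u : idx => u.1 != t) (ecomp (t, i)) p /\
    d t i = csub (ecomp (t, i)) p.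

Definition Delta (Sig : covf) (d : 'I_N -> 'I_m -> coef) (t : 'I_N) : 'M[R]_m :=
  \matrix_(i, j) ip Sig (d t i) (d t j).

End Defs.

Definition posdef (R : realFieldType) (m : nat) (M : 'M[R]_m) : Prop :=
  forall v : 'cV[R]_m, v != 0 -> 0 < (v^T *m M *m v) ord0 ord0.

(* Main.v *)
Require Import Defs.
From HB Require Import structures.
From mathcomp Require Import all_boot all_order all_algebra.
From mathcomp Require Import zify ring lra.
Import Order.TTheory GRing.Theory Num.Theory.
Local Open Scope ring_scope.

Lemma modL (N r1 r2 c : nat) : (0 < N)%N -> (r1 < N)%N -> (r2 < N)%N ->
  (((r1 + c) %% N + N - (r2 + c) %% N) %% N = (r1 + N - r2) %% N)%N.
Proof. move=> N0 h1 h2. apply/eqP; rewrite -(eqn_modDr (r2 + c)).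
have hy : ((r2 + c) %% N < N)%N by rewrite ltn_pmod.
rewrite -modnDmr.
have -> : ((r1 + c) %% N + N - (r2 + c) %% N + (r2 + c) %% N = (r1 + c) %% N + N)%N by lia.
have -> : (r1 + N - r2 + (r2 + c) = (r1 + c) + N)%N by lia.
by rewrite modnDml.
Qed.

Lemma ipE (R : realFieldType) N m (Sig : covf R N m) a b :
  ip Sig a b = \sum_u a u * \sum_v Sig u v * b v.
Proof.
rewrite /ip; apply: eq_bigr => u _; rewrite big_distrr; apply: eq_bigr => v _ /=.
by rewrite mulrA.
Qed.

Lemma ip_sym (R : realFieldType) N m (Sig : covf R N m) a b :
  (forall u v, Sig u v = Sig v u) -> ip Sig a b = ip Sig b a.
Proof.
move=> HS; rewrite /ip exchange_big; apply: eq_bigr => u _; apply: eq_bigr => v _.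
rewrite HS; ring.
Qed.

Lemma ip_linl (R : realFieldType) N m (Sig : covf R N m) (I : finType)
  (c : I -> R) (f : I -> coef R N m) b :
  ip Sig (fun u => \sum_k c k * f k u) b = \sum_k c k * ip Sig (f k) b.
Proof.
rewrite ipE. under eq_bigr do rewrite big_distrl.
rewrite exchange_big; apply: eq_bigr => k _.
rewrite ipE big_distrr; apply: eq_bigr => u _ /=; by rewrite mulrA.
Qed.

Lemma ip_addl (R : realFieldType) N m (Sig : covf R N m) x y b :
  ip Sig (fun u => x u + y u) b = ip Sig x b + ip Sig y b.
Proof. rewrite !ipE -big_split; apply: eq_bigr => u _ /=; by rewrite mulrDl. Qed.

Lemma ip_ecompR (R : realFieldType) N m (Sig : covf R N m) x v :
  ip Sig x (@ecomp R N m v) = \sum_u x u * Sig u v.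
Proof.
rewrite ipE; apply: eq_bigr => u _; congr (_ * _).
rewrite (bigD1 v) //= big1 ?addr0; first by rewrite /ecomp eqxx mulr1.
by move=> w /negbTE hw; rewrite /ecomp hw mulr0.
Qed.

Lemma ip_decompR (R : realFieldType) N m (Sig : covf R N m) x b :
  ip Sig x b = \sum_v ip Sig x (@ecomp R N m v) * b v.
Proof.
under eq_bigr do rewrite ip_ecompR.
rewrite /ip exchange_big; apply: eq_bigr => v _.
by rewrite big_distrl.
Qed.

Lemma ip_shift (R : realFieldType) N m (Sig : covf R N m) (N0 : (0 < N)%N)
  (c : nat) (a : coef R N m) :
  block_circulant Sig ->
  ip Sig (fun u => a (Ordinal (ltn_pmod (u.1 + c) N0), u.2))
         (fun u => a (Ordinal (ltn_pmod (u.1 + c) N0), u.2)) = ip Sig a a.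
Proof.
move=> [Cb HCb].
pose h := fun u : idx N m => (Ordinal (ltn_pmod (u.1 + c) N0), u.2).
have inj : injective h.
  move=> [r1 i] [r2 j] [/= e1 ->].
  congr pair; apply/val_inj => /=.
  move/eqP: e1; rewrite eqn_modDr => /eqP.
  by rewrite !modn_small.
symmetry; rewrite /ip (reindex_inj inj); apply: eq_bigr => u _.
rewrite (reindex_inj inj); apply: eq_bigr => v _.
congr (_ * _ * _).
case: u v => [r1 i] [r2 j]; rewrite /h /= !HCb /=.
by rewrite modL.
Qed.

Lemma ip_ext (R : realFieldType) N m (Sig : covf R N m) a a2 b b2 :
  (forall x, a x = a2 x) -> (forall x, b x = b2 x) -> ip Sig a b = ip Sig a2 b2.
Proof. by move=> ha hb; rewrite /ip; apply: eq_bigr => u _; apply: eq_bigr => v _; rewrite ha hb. Qed.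

Lemma conj_facts (R : realFieldType) (m N : nat)
    (Sig : covf R N m) (d : 'I_N -> 'I_m -> coef R N m) (t : 'I_N) (v : 'cV[R]_m) :
  (forall u w, Sig u w = Sig w u) ->
  conjugate_process Sig d ->
  let w := fun u => \sum_i v i ord0 * d t i u in
  [/\ (v^T *m Delta Sig d t *m v) ord0 ord0 = ip Sig w w,
      forall i, w (t, i) = v i ord0
    & forall b, supp_in (fun u : idx N m => u.1 != t) b -> ip Sig w b = 0].
Proof.
move=> HS Hc w; split.
- rewrite mxE. under eq_bigr do rewrite mxE big_distrl.
  rewrite exchange_big /w ip_linl; apply: eq_bigr => i _.
  rewrite (@ip_sym _ _ _ Sig _ _ HS) ip_linl big_distrr; apply: eq_bigr => j _ /=.
  rewrite !mxE (@ip_sym _ _ _ Sig _ _ HS); ring.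
- move=> i; rewrite /w (bigD1 i) //= big1 ?addr0.
  + have [p [[Hp _] ->]] := Hc t i.
    by rewrite /csub /ecomp eqxx Hp ?eqxx // subr0 mulr1.
  + move=> k hk; have [p [[Hp _] ->]] := Hc t k.
    rewrite /csub /ecomp Hp ?eqxx //= subr0.
    have -> : ((t, i) == (t, k)) = false.
      by apply/negbTE; apply: contra hk => /eqP [->].
    by rewrite mulr0.
- move=> b Hb; rewrite ip_decompR big1 // => u _.
  case: (boolP (u.1 != t)) => hu; last by rewrite (Hb u hu) mulr0.
  rewrite /w ip_linl big1 ?mul0r // => k _.
  have [p [[_ Hp] ->]] := Hc t k.
  by rewrite Hp // mulr0.
Qed.

Lemma ip_split (R : realFieldType) N m (Sig : covf R N m) (w u : coef R N m) :
  (forall x y, Sig x y = Sig y x) ->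
  ip Sig (fun x => w x + u x) (fun x => w x + u x) =
  ip Sig w w + 2 * ip Sig w u + ip Sig u u.
Proof.
move=> HS; rewrite ip_addl !(@ip_sym _ _ _ Sig _ (fun x => w x + u x) HS) !ip_addl.
rewrite (@ip_sym _ _ _ Sig u w HS); ring.
Qed.

Theorem proposition2 (R : realFieldType) (m n N : nat)
    (Sig : covf R N m) (d : 'I_N -> 'I_m -> coef R N m) (t : 'I_N) :
  (1 <= m)%N -> (1 <= n)%N -> (2 * n < N)%N ->
  second_order_cov Sig -> reciprocal n Sig -> conjugate_process Sig d ->
  (full_rank Sig <-> posdef (Delta Sig d t)).
Proof.
move=> _ _ _ [HS Hpsd HC] _ Hc; split.
- move=> Hfr v hv; have [e1 e2 e3] := @conj_facts _ _ _ Sig d t v HS Hc; rewrite e1; apply: Hfr.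
  case: (pickP (fun i => v i ord0 != 0)) => [i hi|H].
    by exists (t, i); rewrite e2.
  exfalso; move/negP: hv; apply; apply/eqP/matrixP => i j.
  by rewrite (ord1 j) mxE; move/negbT: (H i); rewrite negbK => /eqP.
- move=> Hpd a [[s i0] hi0].
  have := Hpsd a; rewrite le0r => /orP [/eqP ha0 | //]; exfalso.
  have N0 : (0 < N)%N by apply: leq_ltn_trans (ltn_ord t).
  pose c := (s + N - t)%N.
  pose a' := fun u : idx N m => a (Ordinal (ltn_pmod (u.1 + c) N0), u.2).
  have ha' : ip Sig a' a' = 0 by rewrite /a' ip_shift.
  have hts : Ordinal (ltn_pmod (t + c) N0) = s.
    apply/val_inj => /=; rewrite /c.
    have -> : (t + (s + N - t) = s + N)%N by have := ltn_ord t; have := ltn_ord s; lia.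
    by rewrite modnDr modn_small.
  pose v : 'cV[R]_m := \col_i a' (t, i).
  have hv : v != 0.
    apply/eqP => hv0; move: hi0; have := congr1 (fun M : 'cV[R]_m => M i0 ord0) hv0.
    by rewrite !mxE /a' /= hts => ->; rewrite eqxx.
  have [e1 e2 e3] := @conj_facts _ _ _ Sig d t v HS Hc.
  have := Hpd v hv; rewrite e1.
  set w := (fun u => _).
  pose u := fun x => a' x - w x.
  have hu : supp_in (fun x : idx N m => x.1 != t) u.
    case=> [r j] /=; rewrite negbK => /eqP -> /=.
    by rewrite /u /w e2 /v mxE subrr.
  have hsum : ip Sig a' a' = ip Sig (fun x => w x + u x) (fun x => w x + u x).
    by apply: ip_ext => x; rewrite /u addrC subrK.
  rewrite ip_split // (e3 u hu) ha' in hsum.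
  have h1 := Hpsd w; have h2 := Hpsd u.
  move=> hpos; lra.
Qed.
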